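(* Let $\mathcal{I}_\nu$ be as in the context. Then: (a) If $\nu\in\left(-1,-\tfrac12\right]$, the function $x\mapsto \mathcal{I}_\nu'(x)$ is strictly log-concave on $(0,\infty)$. (b) If $\nu>-1$, the function $x\mapsto \mathcal{I}_\nu'(x)$ is strictly log-concave on $\left(0,\sqrt{2(\nu+3)}\right)$. (c) If $\nu>-\tfrac12$, there exists $x_\nu>\sqrt{2(\nu+3)}$ such that $x\mapsto\mathcal{I}_\nu'(x)$ is strictly log-concave on $(0,x_\nu)$ and strictly log-convex on $(x_\nu,\infty)$.
   Context: For $\nu>-1$ define $\mathcal{I}_\nu:\mathbb{R}\to[1,\infty)$ by $\mathcal{I}_\nu(x)=\sum_{n\ge0}\frac{(1/4)^n}{(\nu+1)_n\, n!}x^{2n}$, where $(a)_n=a(a+1)\cdots(a+n-1)$, $(a)_0=1$. Equivalently $\mathcal{I}_\nu(x)=2^\nu\Gamma(\nu+1)x^{-\nu}I_\nu(x)$ for $x>0$, where $I_\nu$ is the modified Bessel function of the first kind. Note $\mathcal{I}_\nu'(x)>0$ for $x>0$. *)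

(* Defs.v *)
From Stdlib Require Import Reals Arith ClassicalEpsilon.
Open Scope R_scope.

Fixpoint poch (a : R) (n : nat) : R :=
  match n with
  | O => 1
  | S k => poch a k * (a + INR k)
  end.

Definition Iterm (nu x : R) (n : nat) : R :=
  (/ 4) ^ n / (poch (nu + 1) n * INR (fact n)) * x ^ (2 * n).

(* I_nu(x) = sum_{n>=0} Iterm nu x n  (the series converges for all x
   when nu > -1; the value is chosen by classical description). *)
Definition Inu (nu x : R) : R :=
  epsilon (inhabits 0) (fun l => infinite_sum (Iterm nu x) l).

Definition strictly_log_concave_on (f : R -> R) (D : R -> Prop) : Prop :=
  (forall x, D x -> 0 < f x) /\
  (forall x y t, D x -> D y -> x <> y -> 0 < t < 1 ->
     t * ln (f x) + (1 - t) * ln (f y) < ln (f (t * x + (1 - t) * y))).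

Definition strictly_log_convex_on (f : R -> R) (D : R -> Prop) : Prop :=
  (forall x, D x -> 0 < f x) /\
  (forall x y t, D x -> D y -> x <> y -> 0 < t < 1 ->
     ln (f (t * x + (1 - t) * y)) < t * ln (f x) + (1 - t) * ln (f y)).

(* Main.v *)
Require Import Defs.
From Stdlib Require Import Reals.
From Stdlib Require Import Lra Lia Psatz ClassicalEpsilon FunctionalExtensionality.
From Coquelicot Require Import Coquelicot.
Open Scope R_scope.

Definition coef (m : R) (n : nat) : R := (/ 4) ^ n / (poch (m + 1) n * INR (Factorial.fact n)).

Lemma poch_pos a n : 0 < a -> 0 < poch a n.
Proof.
  intros Ha; induction n as [|n IH]; simpl; [lra|].
  apply Rmult_lt_0_compat; [exact IH|]. pose proof (pos_INR n); lra.
Qed.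

Lemma poch_shift a n : poch a (S n) = a * poch (a + 1) n.
Proof.
  induction n as [|n IH].
  - simpl. ring.
  - change (poch a (S (S n))) with (poch a (S n) * (a + INR (S n))).
    rewrite IH. simpl poch. rewrite S_INR. destruct n; simpl; ring.
Qed.

Lemma coef_pos m n : -1 < m -> 0 < coef m n.
Proof.
  intros Hm. unfold coef. apply Rdiv_lt_0_compat.
  - apply pow_lt; lra.
  - apply Rmult_lt_0_compat; [apply poch_pos; lra|]. apply lt_0_INR, Factorial.lt_O_fact.
Qed.

Lemma coef_ratio m n : -1 < m ->
  coef m (S n) / coef m n = / 4 * (/ (m + 1 + INR n) * / INR (S n)).
Proof.
  intros Hm. unfold coef. simpl poch.
  pose proof (poch_pos (m+1) n ltac:(lra)).
  pose proof (pos_INR n).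
  assert (INR (Factorial.fact n) > 0) by (apply lt_0_INR, Factorial.lt_O_fact).
  change (Factorial.fact (S n)) with (S n * Factorial.fact n)%nat; rewrite mult_INR, S_INR. simpl pow.
  assert (0 < (/4)^n) by (apply pow_lt; lra).
  field. repeat split; lra.
Qed.

Lemma CV_coef m : -1 < m -> CV_radius (coef m) = p_infty.
Proof.
  intros Hm. apply CV_radius_infinite_DAlembert.
  - intros n. pose proof (coef_pos m n Hm). lra.
  - apply is_lim_seq_ext with (fun n => / 4 * (/ (m + 1 + INR n) * / INR (S n))).
    + intros n. rewrite coef_ratio by exact Hm.
      rewrite Rabs_right; [reflexivity|].
      pose proof (pos_INR n). rewrite S_INR.
      apply Rle_ge. apply Rmult_le_pos; [lra|].
      apply Rmult_le_pos; apply Rlt_le, Rinv_0_lt_compat; lra.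
    + replace (Finite 0) with (Rbar_mult (/4) (Rbar_mult 0 0)) by (simpl; f_equal; ring).
      apply is_lim_seq_scal_l. apply is_lim_seq_mult'.
      * replace (Finite 0) with (Rbar_inv p_infty) by reflexivity.
        apply is_lim_seq_inv; [|discriminate].
        eapply is_lim_seq_plus; [apply is_lim_seq_const|apply is_lim_seq_INR|].
        reflexivity.
      * replace (Finite 0) with (Rbar_inv p_infty) by reflexivity.
        apply is_lim_seq_inv; [|discriminate].
        apply (is_lim_seq_incr_1 (fun n => INR n)). apply is_lim_seq_INR.
Qed.

Lemma ex_ps m y : -1 < m -> ex_pseries (coef m) y.
Proof. intros Hm. apply CV_radius_inside. rewrite CV_coef by exact Hm. exact I. Qed.

Lemma Inu_PS m x : -1 < m -> Inu m x = PSeries (coef m) (x ^ 2).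
Proof.
  intros Hm.
  assert (H : infinite_sum (Iterm m x) (PSeries (coef m) (x ^ 2))).
  { apply is_series_Reals.
    apply is_series_ext with (fun n => coef m n * (x ^ 2) ^ n).
    - intros n. unfold Iterm, coef. rewrite pow_mult. reflexivity.
    - apply is_pseries_R. apply PSeries_correct. apply ex_ps. exact Hm. }
  unfold Inu. apply (uniqueness_sum (Iterm m x)); [|exact H].
  apply epsilon_spec. exists (PSeries (coef m) (x ^ 2)). exact H.
Qed.


Lemma coef_deriv m n : -1 < m ->
  INR (S n) * coef m (S n) = / (4 * (m + 1)) * coef (m + 1) n.
Proof.
  intros Hm. unfold coef. rewrite poch_shift.
  change (Factorial.fact (S n)) with (S n * Factorial.fact n)%nat; rewrite mult_INR.
  pose proof (poch_pos (m+1+1) n ltac:(lra)).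
  pose proof (pos_INR n).
  assert (INR (Factorial.fact n) > 0) by (apply lt_0_INR, Factorial.lt_O_fact).
  rewrite S_INR. simpl pow. field. repeat split; lra.
Qed.

Lemma Inu_deriv m x : -1 < m ->
  derivable_pt_lim (Inu m) x (x * Inu (m + 1) x / (2 * (m + 1))).
Proof.
  intros Hm.
  assert (E : Inu m = comp (PSeries (coef m)) (fun t => t ^ 2)).
  { apply functional_extensionality. intros t. unfold comp. apply Inu_PS; exact Hm. }
  rewrite E.
  replace (x * Inu (m + 1) x / (2 * (m + 1)))
    with (PSeries (PS_derive (coef m)) (x ^ 2) * (INR 2 * x ^ (2 - 1))).
  - apply derivable_pt_lim_comp.
    + apply derivable_pt_lim_pow.
    + apply is_derive_Reals. apply is_derive_PSeries. rewrite CV_coef by exact Hm. exact I.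
  - rewrite (Inu_PS (m+1)) by lra.
    rewrite (PSeries_ext _ (PS_scal (/ (4 * (m + 1))) (coef (m+1)))).
    + rewrite PSeries_scal. simpl. field. lra.
    + intros n. unfold PS_derive, PS_scal. rewrite coef_deriv by exact Hm. reflexivity.
Qed.

Lemma coef_contig m n : -1 < m ->
  coef m (S n) = coef (m + 1) (S n) + / (4 * (m + 1) * (m + 1 + 1)) * coef (m + 1 + 1) n.
Proof.
  intros Hm. unfold coef.
  rewrite (poch_shift (m+1)), (poch_shift (m+1+1)).
  change (Factorial.fact (S n)) with (S n * Factorial.fact n)%nat; rewrite mult_INR.
  simpl poch.
  assert (E : poch (m + 1 + 1) (S n) = (m+1+1) * poch (m+1+1+1) n) by apply poch_shift.
  simpl poch in E.
  pose proof (poch_pos (m+1+1+1) n ltac:(lra)).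
  pose proof (poch_pos (m+1+1) n ltac:(lra)).
  pose proof (pos_INR n).
  assert (INR (Factorial.fact n) > 0) by (apply lt_0_INR, Factorial.lt_O_fact).
  rewrite S_INR. simpl pow.
  assert (Q : poch (m + 1 + 1) n = (m+1+1) * poch (m+1+1+1) n / (m + 1 + 1 + INR n)).
  { rewrite <- E. field. lra. }
  rewrite Q. field. repeat split; intro; lra.
Qed.

Lemma Inu_contig m x : -1 < m ->
  Inu m x = Inu (m + 1) x + x ^ 2 * Inu (m + 1 + 1) x / (4 * (m + 1) * (m + 1 + 1)).
Proof.
  intros Hm. rewrite !Inu_PS by lra.
  set (y := x ^ 2).
  set (c := / (4 * (m + 1) * (m + 1 + 1))).
  transitivity (PSeries (PS_plus (coef (m+1)) (PS_scal c (PS_incr_1 (coef (m+1+1))))) y).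
  - apply PSeries_ext. intros [|n].
    + unfold PS_plus, PS_scal, PS_incr_1, coef. simpl. change zero with 0. change plus with Rplus.
      change scal with Rmult. simpl. ring.
    + unfold PS_plus, PS_scal, PS_incr_1. change plus with Rplus. change scal with Rmult.
      simpl. rewrite coef_contig by exact Hm. reflexivity.
  - rewrite PSeries_plus.
    + rewrite PSeries_scal, PSeries_incr_1. unfold c. field. lra.
    + apply ex_ps; lra.
    + apply ex_pseries_scal; [apply Rmult_comm|]. apply ex_pseries_incr_1. apply ex_ps; lra.
Qed.

Lemma Inu_ge1 m x : -1 < m -> 1 <= Inu m x.
Proof.
  intros Hm.
  assert (H : infinite_sum (Iterm m x) (Inu m x)).
  { rewrite Inu_PS by exact Hm. apply is_series_Reals.
    apply is_series_ext with (fun n => coef m n * (x ^ 2) ^ n).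
    - intros n. unfold Iterm, coef. rewrite pow_mult. reflexivity.
    - apply is_pseries_R. apply PSeries_correct. apply ex_ps. exact Hm. }
  replace 1 with (sum_f_R0 (Iterm m x) 0).
  - apply sum_incr. exact H. intros n. unfold Iterm.
    apply Rmult_le_pos.
    + pose proof (coef_pos m n Hm) as P. unfold coef in P. lra.
    + rewrite pow_mult. apply pow_le. nra.
  - simpl. unfold Iterm. simpl. field.
Qed.

Lemma Inu_0 m : -1 < m -> Inu m 0 = 1.
Proof.
  intros Hm. rewrite Inu_PS by exact Hm. replace (0^2) with 0 by ring.
  rewrite PSeries_0. unfold coef. simpl. field.
Qed.


Lemma dl_eq f x l l' : derivable_pt_lim f x l -> l = l' -> derivable_pt_lim f x l'.
Proof. intros H ->. exact H. Qed.
Lemma dl_mul f g x a b : derivable_pt_lim f x a -> derivable_pt_lim g x b ->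
  derivable_pt_lim (fun t => f t * g t) x (a * g x + f x * b).
Proof. intros Ha Hb. exact (derivable_pt_lim_mult f g x a b Ha Hb). Qed.
Lemma dl_add f g x a b : derivable_pt_lim f x a -> derivable_pt_lim g x b ->
  derivable_pt_lim (fun t => f t + g t) x (a + b).
Proof. intros Ha Hb. exact (derivable_pt_lim_plus f g x a b Ha Hb). Qed.
Lemma dl_sub f g x a b : derivable_pt_lim f x a -> derivable_pt_lim g x b ->
  derivable_pt_lim (fun t => f t - g t) x (a - b).
Proof. intros Ha Hb. exact (derivable_pt_lim_minus f g x a b Ha Hb). Qed.
Lemma dl_const c x : derivable_pt_lim (fun _ => c) x 0.
Proof. exact (derivable_pt_lim_const c x). Qed.
Lemma dl_id x : derivable_pt_lim (fun t => t) x 1.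
Proof. exact (derivable_pt_lim_id x). Qed.
Lemma dl_ext f g x l : (forall t, f t = g t) -> derivable_pt_lim f x l -> derivable_pt_lim g x l.
Proof. intros E H. replace g with f; [exact H|]. apply functional_extensionality. exact E. Qed.

Lemma dl_pow2 f x a : derivable_pt_lim f x a ->
  derivable_pt_lim (fun t => f t ^ 2) x (2 * f x * a).
Proof.
  intros Ha. apply (dl_ext (fun t => f t * f t)). { intros t. ring. }
  eapply dl_eq. { apply dl_mul; exact Ha. } ring.
Qed.
Ltac dtac := repeat first [ eassumption | apply dl_const | apply dl_id | apply dl_pow2
  | apply dl_mul | apply dl_sub | apply dl_add ].

Definition v nu x := Inu (nu + 1) x.
Definition V1 nu x := x * Inu (nu + 1 + 1) x / (2 * (nu + 1 + 1)).
Definition V2 nu x :=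
  (Inu (nu + 1 + 1) x + x * (x * Inu (nu + 1 + 1 + 1) x / (2 * (nu + 1 + 1 + 1)))) / (2 * (nu + 1 + 1)).

Lemma dv nu x : -1 < nu -> derivable_pt_lim (v nu) x (V1 nu x).
Proof. intros H. apply (Inu_deriv (nu + 1)); lra. Qed.

Lemma dV1 nu x : -1 < nu -> derivable_pt_lim (V1 nu) x (V2 nu x).
Proof.
  intros H. unfold V1, V2.
  apply (dl_ext (fun t => (t * Inu (nu + 1 + 1) t) * / (2 * (nu + 1 + 1)))).
  { intros t. unfold Rdiv. reflexivity. }
  eapply dl_eq.
  { apply dl_mul; [apply dl_mul; [apply dl_id | apply Inu_deriv; lra] | apply dl_const]. }
  cbv beta. field. lra.
Qed.

Lemma ode nu x : -1 < nu -> x * V2 nu x + (2 * nu + 3) * V1 nu x - x * v nu x = 0.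
Proof.
  intros H. unfold V1, V2, v. rewrite (Inu_contig (nu + 1)) by lra.
  field. lra.
Qed.

Lemma v_ge1 nu x : -1 < nu -> 1 <= v nu x.
Proof. intros H. apply Inu_ge1. lra. Qed.

Lemma V1_pos nu x : -1 < nu -> 0 < x -> 0 < V1 nu x.
Proof.
  intros H Hx. unfold V1. pose proof (Inu_ge1 (nu+1+1) x ltac:(lra)).
  apply Rdiv_lt_0_compat; [apply Rmult_lt_0_compat|]; lra.
Qed.

Lemma v0 nu : -1 < nu -> v nu 0 = 1.
Proof. intros H. apply Inu_0. lra. Qed.

Definition Ef nu x :=
  x ^ 2 * v nu x ^ 2 - (2 * nu + 3) * x * v nu x * V1 nu x - x ^ 2 * V1 nu x ^ 2 - v nu x ^ 2.
Definition Hf nu x :=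
  x * V1 nu x ^ 2 + (2 * nu + 4) * v nu x * V1 nu x - x * v nu x ^ 2.

Lemma dE nu x : -1 < nu -> derivable_pt_lim (Ef nu) x ((2 * nu + 1) * Hf nu x).
Proof.
  intros H. unfold Ef.
  pose proof (dv nu x H) as D0. pose proof (dV1 nu x H) as D1.
  pose proof (ode nu x H) as O.
  eapply dl_eq. { dtac. }
  cbv beta. unfold Hf.
  match goal with |- _ = ?R => transitivity (R - ((2*nu+3)*v nu x + 2*x*V1 nu x) *
     (x * V2 nu x + (2*nu+3)*V1 nu x - x*v nu x)); [ring| rewrite O; ring] end.
Qed.


Lemma barrier (g g' : R -> R) :
  (forall x, derivable_pt_lim g x (g' x)) -> g 0 = 0 ->
  (forall x, 0 < x -> g x <= 0 -> 0 < g' x) -> forall x, 0 < x -> 0 < g x.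
Proof.
  intros Dg g0 Hg x1 Hx1.
  destruct (Rlt_or_le 0 (g x1)) as [|Hle]; [assumption|exfalso].
  destruct (continuity_ab_min g 0 x1) as [t [Ht Hr]]; [lra| |].
  { intros c _. apply derivable_continuous_pt. exists (g' c). apply Dg. }
  assert (Ex : exists t, 0 < t <= x1 /\ g t <= 0 /\ forall c, 0 <= c <= x1 -> g t <= g c).
  { destruct (Rle_lt_or_eq_dec 0 t (proj1 Hr)) as [Hp|He].
    - exists t. pose proof (Ht x1 ltac:(lra)). repeat split; try lra. exact Ht.
    - exists x1. subst t. repeat split; try lra. intros c Hc. pose proof (Ht c Hc). lra. }
  clear t Ht Hr. destruct Ex as [t [Ht [Hgt Hmin]]].
  pose proof (Hg t ltac:(lra) Hgt) as Hd.
  destruct (Dg t (g' t / 2) ltac:(lra)) as [delta Hdel].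
  set (h := - Rmin (delta / 2) (t / 2)).
  assert (Hh1 : h < 0). { unfold h. pose proof (cond_pos delta). apply Ropp_lt_gt_0_contravar.
    apply Rmin_pos; lra. }
  assert (Hh2 : - h <= t / 2) by (unfold h; rewrite Ropp_involutive; apply Rmin_r).
  assert (Hh3 : - h <= delta / 2) by (unfold h; rewrite Ropp_involutive; apply Rmin_l).
  pose proof (cond_pos delta).
  specialize (Hdel h ltac:(lra) ltac:(rewrite Rabs_left; lra)).
  apply Rabs_def2 in Hdel. destruct Hdel as [_ Hdel].
  set (qq := (g (t + h) - g t) / h) in Hdel.
  assert (Eq : g (t + h) - g t = qq * h) by (unfold qq; field; lra).
  pose proof (Hmin (t + h) ltac:(lra)).
  nra.
Qed.

Lemma dl_sqrt c x : 0 < c -> derivable_pt_lim (fun t => sqrt (t ^ 2 + c)) x (x / sqrt (x ^ 2 + c)).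
Proof.
  intros Hc.
  assert (P : 0 < x ^ 2 + c) by nra.
  apply (dl_ext (comp sqrt (fun t => t ^ 2 + c))). { intros; reflexivity. }
  eapply dl_eq. { apply derivable_pt_lim_comp.
    - apply (dl_ext (fun t => t ^ 2 + c)). { intros; reflexivity. }
      apply dl_add; [apply dl_pow2, dl_id | apply dl_const].
    - apply derivable_pt_lim_sqrt. exact P. }
  pose proof (sqrt_lt_R0 _ P). cbv beta. field. lra.
Qed.

Definition Psi nu c x := (nu + 3/2 + sqrt (x ^ 2 + c)) * V1 nu x - x * v nu x.
Definition dPsi nu c x := x / sqrt (x ^ 2 + c) * V1 nu x + (nu + 3/2 + sqrt (x ^ 2 + c)) * V2 nu x
   - (v nu x + x * V1 nu x).

Lemma Psi_deriv nu c x : -1 < nu -> 0 < c -> derivable_pt_lim (Psi nu c) x (dPsi nu c x).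
Proof.
  intros H Hc. unfold Psi.
  pose proof (dv nu x H) as D0. pose proof (dV1 nu x H) as D1.
  pose proof (dl_sqrt c x Hc) as D2.
  eapply dl_eq. { dtac. } cbv beta. unfold dPsi. ring.
Qed.


Lemma Psi_id nu c x : -1 < nu -> 0 < c -> 0 < x ->
  let a := nu + 3/2 in let s := sqrt (x ^ 2 + c) in
  x * s * dPsi nu c x = ((c - a^2 - a) * s - c) * V1 nu x - s * (a + s - 1) * Psi nu c x.
Proof.
  intros H Hc Hx a s.
  assert (Hs : s * s = x ^ 2 + c) by (apply sqrt_sqrt; nra).
  assert (Hs0 : 0 < s) by (apply sqrt_lt_R0; nra).
  pose proof (ode nu x H) as O.
  unfold dPsi, Psi. fold a s.
  transitivity (((c - a^2 - a) * s - c) * V1 nu x - s * (a + s - 1) * ((a + s) * V1 nu x - x * v nu x)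
     + (s - 1) * (s * s - x ^ 2 - c) * V1 nu x + (a + s) * s * (x * V2 nu x + (2 * nu + 3) * V1 nu x - x * v nu x)).
  - unfold a. field. lra.
  - rewrite O, Hs. ring.
Qed.

Lemma Psi_at0 nu c : -1 < nu -> Psi nu c 0 = 0.
Proof. intros H. unfold Psi, V1. unfold Rdiv. ring. Qed.

Lemma Plo_pos nu x : -1 < nu -> 0 < x -> 0 < Psi nu ((nu + 5/2) ^ 2) x.
Proof.
  intros H. revert x.
  assert (Hc : 0 < (nu + 5/2) ^ 2) by nra.
  apply (barrier (Psi nu ((nu + 5/2) ^ 2)) (dPsi nu ((nu + 5/2) ^ 2))).
  - intros x. apply Psi_deriv; assumption.
  - apply Psi_at0; assumption.
  - intros x Hx Hle.
    pose proof (Psi_id nu _ x H Hc Hx) as Id. cbv zeta in Id.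
    set (s := sqrt (x ^ 2 + (nu + 5 / 2) ^ 2)) in *.
    assert (Hs : s * s = x ^ 2 + (nu + 5/2) ^ 2) by (apply sqrt_sqrt; nra).
    assert (Hs0 : 0 < s) by (apply sqrt_lt_R0; nra).
    assert (Hsb : nu + 5/2 < s) by nra.
    pose proof (V1_pos nu x H Hx).
    assert (K : 0 < x * s * dPsi nu ((nu + 5 / 2) ^ 2) x).
    { rewrite Id.
      replace ((nu + 5 / 2) ^ 2 - (nu + 3 / 2) ^ 2 - (nu + 3 / 2)) with (nu + 5/2) by field.
      assert (0 < ((nu + 5 / 2) * s - (nu + 5 / 2) ^ 2)) by nra.
      assert (0 <= - (s * (nu + 3 / 2 + s - 1) * Psi nu ((nu + 5 / 2) ^ 2) x)).
      { assert (0 < s * (nu + 3 / 2 + s - 1)) by nra. nra. }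
      nra. }
    assert (0 < x * s) by nra.
    destruct (Rlt_or_le 0 (dPsi nu ((nu + 5 / 2) ^ 2) x)) as [|Hn]; [assumption|]. nra.
Qed.

Lemma Phi_neg nu x : -1/2 < nu -> 0 < x ->
  Psi nu ((nu + 3/2) ^ 2 + (nu + 3/2)) x < 0.
Proof.
  intros H Hx0.
  assert (H1 : -1 < nu) by lra.
  assert (Hc : 0 < (nu + 3/2) ^ 2 + (nu + 3/2)) by nra.
  set (c := (nu + 3/2) ^ 2 + (nu + 3/2)) in *.
  enough (0 < (fun t => - Psi nu c t) x) by (cbv beta in *; lra).
  revert x Hx0.
  apply (barrier (fun t => - Psi nu c t) (fun t => - dPsi nu c t)).
  - intros x. apply (dl_ext (fun t => 0 - Psi nu c t)). { intros; ring. }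
    eapply dl_eq. { apply dl_sub; [apply dl_const | apply Psi_deriv; assumption]. } ring.
  - rewrite Psi_at0 by assumption. ring.
  - intros x Hx Hle.
    pose proof (Psi_id nu _ x H1 Hc Hx) as Id. cbv zeta in Id.
    set (s := sqrt (x ^ 2 + c)) in *.
    assert (Hs : s * s = x ^ 2 + c) by (apply sqrt_sqrt; nra).
    assert (Hs0 : 0 < s) by (apply sqrt_lt_R0; nra).
    pose proof (V1_pos nu x H1 Hx).
    assert (K : x * s * dPsi nu c x < 0).
    { rewrite Id.
      replace (c - (nu + 3 / 2) ^ 2 - (nu + 3 / 2)) with 0 by (unfold c; ring).
      assert (0 <= s * (nu + 3 / 2 + s - 1) * Psi nu c x).
      { assert (0 < s * (nu + 3 / 2 + s - 1)) by nra. nra. }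
      nra. }
    assert (0 < x * s) by nra.
    destruct (Rlt_or_le (dPsi nu c x) 0) as [|Hn]; [lra|]. nra.
Qed.


Lemma H_pos nu x : -1 < nu -> 0 < x -> 0 < Hf nu x.
Proof.
  intros H Hx.
  pose proof (Plo_pos nu x H Hx) as Pp. unfold Psi in Pp.
  set (s := sqrt (x ^ 2 + (nu + 5 / 2) ^ 2)) in *.
  assert (Hs : s * s = x ^ 2 + (nu + 5/2) ^ 2) by (apply sqrt_sqrt; nra).
  assert (Hs0 : 0 < s) by (apply sqrt_lt_R0; nra).
  assert (Hsb : nu + 5/2 < s) by nra.
  pose proof (V1_pos nu x H Hx) as Hw. pose proof (v_ge1 nu x H) as Hv.
  set (P := (nu + 3 / 2 + s) * V1 nu x) in *.
  set (u := x * v nu x) in *.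
  assert (Hu : 0 < u) by (unfold u; nra).
  assert (Id : P * (x * Hf nu x) = (P - u) * (x ^ 2 * V1 nu x ^ 2) + u * ((s - (nu + 5/2)) * V1 nu x ^ 2)
     + u * P * (P - u) + u * V1 nu x ^ 2 * (x ^ 2 + (nu + 5/2) ^ 2 - s * s)).
  { unfold P, u, Hf. field. }
  rewrite Hs in Id. replace (x ^ 2 + (nu + 5 / 2) ^ 2 - (x ^ 2 + (nu + 5 / 2) ^ 2)) with 0 in Id by ring.
  assert (A1 : 0 < (P - u) * (x ^ 2 * V1 nu x ^ 2)) by (apply Rmult_lt_0_compat; [lra| apply Rmult_lt_0_compat; apply pow_lt; lra]).
  assert (A2 : 0 < u * ((s - (nu + 5/2)) * V1 nu x ^ 2)) by (apply Rmult_lt_0_compat; [lra| apply Rmult_lt_0_compat; [lra| apply pow_lt; lra]]).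
  assert (A3 : 0 < u * P * (P - u)) by (apply Rmult_lt_0_compat; [apply Rmult_lt_0_compat; lra| lra]).
  assert (0 < P * (x * Hf nu x)) by lra.
  assert (0 < P) by lra.
  assert (0 < x * Hf nu x).
  { destruct (Rlt_or_le 0 (x * Hf nu x)) as [|Hn]; [assumption|]. nra. }
  nra.
Qed.

Lemma E_at0 nu : -1 < nu -> Ef nu 0 = -1.
Proof. intros H. unfold Ef. rewrite v0 by exact H. ring. Qed.

Lemma E_x0 nu : -1 < nu -> Ef nu (sqrt (2 * (nu + 3))) < 0.
Proof.
  intros H. set (x0 := sqrt (2 * (nu + 3))).
  assert (Hx0 : 0 < x0) by (apply sqrt_lt_R0; lra).
  assert (Hx2 : x0 ^ 2 = 2 * nu + 6) by (unfold x0; rewrite pow2_sqrt; lra).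
  assert (Hx2b : x0 * x0 = 2 * nu + 6) by (rewrite <- Hx2; ring).
  pose proof (Plo_pos nu x0 H Hx0) as Pp. unfold Psi in Pp.
  assert (Hs : sqrt (x0 ^ 2 + (nu + 5 / 2) ^ 2) = nu + 7/2).
  { rewrite Hx2. rewrite <- (sqrt_pow2 (nu + 7/2)) by lra. f_equal. field. }
  rewrite Hs in Pp.
  pose proof (V1_pos nu x0 H Hx0) as Hw. pose proof (v_ge1 nu x0 H) as Hv.
  set (t := x0 * V1 nu x0).
  assert (Ht : (2 * nu + 5) * t > (2 * nu + 6) * v nu x0).
  { unfold t. replace (2 * nu + 6) with (x0 * x0) by lra. replace (nu + 3 / 2 + (nu + 7 / 2)) with (2 * nu + 5) in Pp by field. nra. }
  set (T := (2 * nu + 5) * t). set (T0 := (2 * nu + 6) * v nu x0).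
  assert (Id : (2 * nu + 5) ^ 2 * Ef nu x0 = - v nu x0 ^ 2
     - (T - T0) * ((2 * nu + 3) * (2 * nu + 5) * v nu x0 + T + T0)).
  { unfold Ef.
    replace ((2 * nu + 3) * x0 * v nu x0 * V1 nu x0) with ((2 * nu + 3) * v nu x0 * t) by (unfold t; ring).
    replace (x0 ^ 2 * V1 nu x0 ^ 2) with (t ^ 2) by (unfold t; ring). rewrite Hx2. unfold T, T0. ring. }
  assert (0 < (T - T0) * ((2 * nu + 3) * (2 * nu + 5) * v nu x0 + T + T0)).
  { apply Rmult_lt_0_compat; [unfold T, T0 in *; lra|]. unfold T, T0, t in *. nra. }
  assert ((2 * nu + 5) ^ 2 * Ef nu x0 < 0) by nra.
  assert (0 < (2 * nu + 5) ^ 2) by nra.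
  destruct (Rlt_or_le (Ef nu x0) 0) as [|Hn]; [assumption|]. nra.
Qed.

Lemma E_big nu : -1/2 < nu -> exists X, 0 < X /\ 0 < Ef nu X.
Proof.
  intros H. assert (H1 : -1 < nu) by lra.
  set (a := nu + 3/2). assert (Ha : 1 < a) by (unfold a; lra).
  set (K := a ^ 3 + 2 * a ^ 2 + 2 * a + 1).
  set (s := K / (a - 1)).
  assert (HsK : s * (a - 1) = K) by (unfold s; field; lra).
  assert (Hs1 : a + 1 < s).
  { assert (K > (a + 1) * (a - 1)) by (unfold K; nra). nra. }
  set (c := a ^ 2 + a).
  set (y := s ^ 2 - c).
  assert (Hy : 0 < y) by (unfold y, c; nra).
  set (X := sqrt y). exists X.
  assert (HX : 0 < X) by (apply sqrt_lt_R0; lra).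
  assert (HX2 : X ^ 2 = y) by (unfold X; rewrite pow2_sqrt; lra).
  split; [exact HX|].
  pose proof (Phi_neg nu X H HX) as Pn. unfold Psi in Pn.
  assert (Hs : sqrt (X ^ 2 + ((nu + 3 / 2) ^ 2 + (nu + 3 / 2))) = s).
  { fold a. fold c. rewrite HX2. unfold y. replace (s ^ 2 - c + c) with (s ^ 2) by ring.
    apply sqrt_pow2. lra. }
  rewrite Hs in Pn. fold a in Pn.
  pose proof (V1_pos nu X H1 HX) as Hw. pose proof (v_ge1 nu X H1) as Hv.
  set (t := X * V1 nu X).
  assert (Ht : (a + s) * t < y * v nu X).
  { unfold t. rewrite <- HX2. nra. }
  set (T := (a + s) * t). set (T0 := y * v nu X).
  set (G := (a - 1) * s ^ 2 - 2 * a * s - a ^ 3 - 2 * a ^ 2).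
  assert (HG : 0 < G).
  { unfold G. assert (G1 : (a - 1) * s ^ 2 - 2 * a * s - a ^ 3 - 2 * a ^ 2
        = s * (a ^ 3 + 2 * a ^ 2 + 1) - a ^ 3 - 2 * a ^ 2).
    { replace ((a - 1) * s ^ 2) with (s * (s * (a - 1))) by ring. rewrite HsK. unfold K. ring. }
    rewrite G1. assert (0 < a ^ 3 + 2 * a ^ 2 + 1) by (assert (0 < a ^ 3) by (apply pow_lt; lra); nra).
    assert (s * (a ^ 3 + 2 * a ^ 2 + 1) > 1 * (a ^ 3 + 2 * a ^ 2 + 1)) by (apply Rmult_gt_compat_r; lra). lra. }
  assert (Id : (a + s) ^ 2 * Ef nu X = v nu X ^ 2 * G
     + (T0 - T) * (2 * a * (a + s) * v nu X + T + T0)).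
  { unfold Ef.
    replace (2 * nu + 3) with (2 * a) by (unfold a; field).
    replace (2 * a * X * v nu X * V1 nu X) with (2 * a * v nu X * t) by (unfold t; ring).
    replace (X ^ 2 * V1 nu X ^ 2) with (t ^ 2) by (unfold t; ring). rewrite HX2.
    unfold T, T0, G, y, c. ring. }
  assert (0 <= (T0 - T) * (2 * a * (a + s) * v nu X + T + T0)).
  { apply Rmult_le_pos; [unfold T, T0 in *; lra|]. unfold T, T0, t in *.
    assert (0 < 2 * a * (a + s) * v nu X) by (repeat apply Rmult_lt_0_compat; lra).
    assert (0 < (a + s) * (X * V1 nu X)) by (apply Rmult_lt_0_compat; [lra| apply Rmult_lt_0_compat; lra]).
    assert (0 < y * v nu X) by (repeat apply Rmult_lt_0_compat; lra). lra. }
  assert (0 < v nu X ^ 2 * G) by (apply Rmult_lt_0_compat; [nra|lra]).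
  assert (0 < (a + s) ^ 2) by nra.
  destruct (Rlt_or_le 0 (Ef nu X)) as [|Hn]; [assumption|]. nra.
Qed.


Lemma dl_inv f x l : derivable_pt_lim f x l -> f x <> 0 ->
  derivable_pt_lim (fun t => / f t) x (- l / f x ^ 2).
Proof.
  intros H Hn. apply is_derive_Reals. apply is_derive_inv; [|exact Hn].
  apply is_derive_Reals. exact H.
Qed.

Lemma dl_ln f x l : derivable_pt_lim f x l -> 0 < f x ->
  derivable_pt_lim (fun t => ln (f t)) x (l / f x).
Proof.
  intros H Hp. apply (dl_ext (comp ln f)). { intros; reflexivity. }
  eapply dl_eq. { apply derivable_pt_lim_comp; [exact H| apply derivable_pt_lim_ln; exact Hp]. }
  field. lra.
Qed.

Definition f0 nu x := x * v nu x / (2 * (nu + 1)).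
Definition Lp nu x := / x + V1 nu x * / v nu x.

Lemma f0_pos nu x : -1 < nu -> 0 < x -> 0 < f0 nu x.
Proof.
  intros H Hx. unfold f0. pose proof (v_ge1 nu x H).
  apply Rdiv_lt_0_compat; [apply Rmult_lt_0_compat|]; lra.
Qed.

Lemma dL nu x : -1 < nu -> 0 < x -> derivable_pt_lim (fun t => ln (f0 nu t)) x (Lp nu x).
Proof.
  intros H Hx. pose proof (dv nu x H) as D0. pose proof (v_ge1 nu x H).
  eapply dl_eq. { apply dl_ln; [|apply f0_pos; assumption].
    unfold f0. apply (dl_ext (fun t => t * v nu t * / (2 * (nu + 1)))). { intros; reflexivity. }
    dtac. }
  cbv beta. unfold Lp, f0. field. repeat split; lra.
Qed.

Lemma dLp nu x : -1 < nu -> 0 < x -> derivable_pt_lim (Lp nu) x (Ef nu x / (x ^ 2 * v nu x ^ 2)).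
Proof.
  intros H Hx. pose proof (dv nu x H) as D0. pose proof (dV1 nu x H) as D1. pose proof (v_ge1 nu x H).
  pose proof (ode nu x H) as O.
  assert (Di1 : derivable_pt_lim (fun t => / t) x (- 1 / x ^ 2)).
  { apply (dl_inv (fun t => t)); [apply dl_id| lra]. }
  assert (Di2 : derivable_pt_lim (fun t => / v nu t) x (- V1 nu x / v nu x ^ 2)).
  { apply (dl_inv (v nu)); [exact D0| lra]. }
  unfold Lp.
  eapply dl_eq. { apply dl_add; [exact Di1| apply dl_mul; [exact D1| exact Di2]]. }
  unfold Ef.
  assert (E2 : x * V2 nu x = x * v nu x - (2 * nu + 3) * V1 nu x) by lra.
  assert (E3 : V2 nu x = (x * v nu x - (2 * nu + 3) * V1 nu x) / x) by (rewrite <- E2; field; lra).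
  rewrite E3. field. split; lra.
Qed.

Lemma concave_lt (D : R -> Prop) (L L' : R -> R) :
  (forall x y z, D x -> D y -> x <= z <= y -> D z) ->
  (forall x, D x -> derivable_pt_lim L x (L' x)) ->
  (forall x y, D x -> D y -> x < y -> L' y < L' x) ->
  forall x y t, D x -> D y -> x < y -> 0 < t < 1 ->
    t * L x + (1 - t) * L y < L (t * x + (1 - t) * y).
Proof.
  intros Cv Dl Dec x y t Dx Dy Hxy Ht.
  set (m := t * x + (1 - t) * y).
  assert (Hm1 : x < m) by (unfold m; nra). assert (Hm2 : m < y) by (unfold m; nra).
  destruct (MVT_cor2 L L' x m Hm1) as [c1 [E1 Hc1]].
  { intros c Hc. apply Dl. apply (Cv x y); [assumption|assumption|lra]. }
  destruct (MVT_cor2 L L' m y Hm2) as [c2 [E2 Hc2]].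
  { intros c Hc. apply Dl. apply (Cv x y); [assumption|assumption|lra]. }
  assert (Hlt : L' c2 < L' c1).
  { apply Dec; [apply (Cv x y) | apply (Cv x y) |]; try assumption; lra. }
  assert (Em1 : m - x = (1 - t) * (y - x)) by (unfold m; ring).
  assert (Em2 : y - m = t * (y - x)) by (unfold m; ring).
  rewrite Em1 in E1. rewrite Em2 in E2.
  assert (Key : t * L x + (1 - t) * L y - L m = t * (1 - t) * (y - x) * (L' c2 - L' c1)).
  { replace (L x) with (L m - L' c1 * ((1 - t) * (y - x))) by lra.
    replace (L y) with (L m + L' c2 * (t * (y - x))) by lra. ring. }
  assert (0 < t * (1 - t) * (y - x)) by (apply Rmult_lt_0_compat; [nra|lra]).
  nra.
Qed.

Lemma concave_ne (D : R -> Prop) (L L' : R -> R) :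
  (forall x y z, D x -> D y -> x <= z <= y -> D z) ->
  (forall x, D x -> derivable_pt_lim L x (L' x)) ->
  (forall x y, D x -> D y -> x < y -> L' y < L' x) ->
  forall x y t, D x -> D y -> x <> y -> 0 < t < 1 ->
    t * L x + (1 - t) * L y < L (t * x + (1 - t) * y).
Proof.
  intros Cv Dl Dec x y t Dx Dy Hne Ht.
  destruct (Rlt_or_le x y) as [Hlt|Hle].
  - apply (concave_lt D L L'); assumption.
  - assert (y < x) by (destruct Hle; [assumption| congruence]).
    pose proof (concave_lt D L L' Cv Dl Dec y x (1 - t) Dy Dx H ltac:(lra)) as K.
    replace (1 - (1 - t)) with t in K by ring.
    replace ((1 - t) * y + t * x) with (t * x + (1 - t) * y) in K by ring. lra.
Qed.

Lemma decr_of_deriv (D : R -> Prop) (F F' : R -> R) :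
  (forall x y z, D x -> D y -> x <= z <= y -> D z) ->
  (forall x, D x -> derivable_pt_lim F x (F' x)) ->
  (forall x, D x -> F' x < 0) ->
  forall x y, D x -> D y -> x < y -> F y < F x.
Proof.
  intros Cv Df Neg x y Dx Dy Hxy.
  destruct (MVT_cor2 F F' x y Hxy) as [c [E Hc]].
  { intros c Hc. apply Df. apply (Cv x y); assumption. }
  assert (D c) by (apply (Cv x y); [assumption|assumption|lra]).
  pose proof (Neg c H). nra.
Qed.


Lemma dI_eq nu (dI : R -> R) x : -1 < nu ->
  (forall x, 0 < x -> derivable_pt_lim (Inu nu) x (dI x)) -> 0 < x -> dI x = f0 nu x.
Proof.
  intros H HdI Hx. apply (uniqueness_limite (Inu nu) x); [apply HdI; exact Hx|].
  exact (Inu_deriv nu x H).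
Qed.

Lemma slc_of_E nu (dI : R -> R) (D : R -> Prop) : -1 < nu ->
  (forall x, 0 < x -> derivable_pt_lim (Inu nu) x (dI x)) ->
  (forall x y z, D x -> D y -> x <= z <= y -> D z) ->
  (forall x, D x -> 0 < x) -> (forall x, D x -> Ef nu x < 0) ->
  strictly_log_concave_on dI D.
Proof.
  intros H HdI Cv Pos Neg. split.
  - intros x Dx. rewrite (dI_eq nu dI x H HdI (Pos x Dx)). apply f0_pos; auto.
  - intros x y t Dx Dy Hne Ht.
    pose proof (Pos x Dx). pose proof (Pos y Dy).
    assert (0 < t * x + (1 - t) * y) by nra.
    rewrite !(dI_eq nu dI _ H HdI) by assumption.
    pose proof (concave_ne D (fun t => ln (f0 nu t)) (Lp nu) Cv) as K.
    cbv beta in K. apply K; try assumption.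
    + intros z Dz. apply dL; auto.
    + apply (decr_of_deriv D (Lp nu) (fun x => Ef nu x / (x ^ 2 * v nu x ^ 2)) Cv).
      * intros z Dz. apply dLp; auto.
      * intros z Dz. pose proof (Pos z Dz). pose proof (v_ge1 nu z H). pose proof (Neg z Dz).
        apply Rdiv_neg_pos; [assumption|]. apply Rmult_lt_0_compat; apply pow_lt; lra.
Qed.

Lemma slcv_of_E nu (dI : R -> R) (D : R -> Prop) : -1 < nu ->
  (forall x, 0 < x -> derivable_pt_lim (Inu nu) x (dI x)) ->
  (forall x y z, D x -> D y -> x <= z <= y -> D z) ->
  (forall x, D x -> 0 < x) -> (forall x, D x -> 0 < Ef nu x) ->
  strictly_log_convex_on dI D.
Proof.
  intros H HdI Cv Pos Ps. split.
  - intros x Dx. rewrite (dI_eq nu dI x H HdI (Pos x Dx)). apply f0_pos; auto.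
  - intros x y t Dx Dy Hne Ht.
    pose proof (Pos x Dx). pose proof (Pos y Dy).
    assert (0 < t * x + (1 - t) * y) by nra.
    rewrite !(dI_eq nu dI _ H HdI) by assumption.
    pose proof (concave_ne D (fun t => - ln (f0 nu t)) (fun t => - Lp nu t) Cv) as K.
    cbv beta in K.
    enough (t * - ln (f0 nu x) + (1 - t) * - ln (f0 nu y) < - ln (f0 nu (t * x + (1 - t) * y))) by lra.
    apply K; try assumption.
    + intros z Dz. apply (dl_ext (fun s => 0 - ln (f0 nu s))). { intros; cbv beta; ring. }
      eapply dl_eq. { apply dl_sub; [apply dl_const| apply dL; auto]. } ring.
    + apply (decr_of_deriv D (fun t => - Lp nu t) (fun x => - (Ef nu x / (x ^ 2 * v nu x ^ 2))) Cv).
      * intros z Dz. apply (dl_ext (fun s => 0 - Lp nu s)). { intros; cbv beta; ring. }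
        eapply dl_eq. { apply dl_sub; [apply dl_const| apply dLp; auto]. } ring.
      * intros z Dz. pose proof (Pos z Dz). pose proof (v_ge1 nu z H). pose proof (Ps z Dz).
        assert (0 < Ef nu z / (z ^ 2 * v nu z ^ 2)); [|lra].
        apply Rdiv_lt_0_compat; [assumption|]. apply Rmult_lt_0_compat; apply pow_lt; lra.
Qed.

Lemma E_cont nu : -1 < nu -> continuity (Ef nu).
Proof.
  intros H x. apply derivable_continuous_pt. exists ((2 * nu + 1) * Hf nu x). apply dE. exact H.
Qed.

Lemma E_neg_a nu x : -1 < nu -> nu <= -1/2 -> 0 < x -> Ef nu x < 0.
Proof.
  intros H Hn Hx.
  destruct (MVT_cor2 (Ef nu) (fun t => (2 * nu + 1) * Hf nu t) 0 x Hx) as [c [E Hc]].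
  { intros c _. apply dE. exact H. }
  pose proof (H_pos nu c H ltac:(lra)). rewrite E_at0 in E by exact H.
  assert ((2 * nu + 1) * Hf nu c * (x - 0) <= 0).
  { assert ((2 * nu + 1) * Hf nu c <= 0) by nra. nra. }
  lra.
Qed.

Lemma E_incr nu x y : -1/2 < nu -> 0 < x -> x < y -> Ef nu x < Ef nu y.
Proof.
  intros H Hx Hxy.
  destruct (MVT_cor2 (Ef nu) (fun t => (2 * nu + 1) * Hf nu t) x y Hxy) as [c [E Hc]].
  { intros c _. apply dE. lra. }
  pose proof (H_pos nu c ltac:(lra) ltac:(lra)).
  assert (0 < (2 * nu + 1) * Hf nu c * (y - x)).
  { apply Rmult_lt_0_compat; [apply Rmult_lt_0_compat|]; lra. }
  lra.
Qed.

Theorem theorem1 :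
  forall (nu : R) (dI : R -> R),
    -1 < nu ->
    (forall x, 0 < x -> derivable_pt_lim (Inu nu) x (dI x)) ->
    (* (a) *)
    (nu <= -1/2 -> strictly_log_concave_on dI (fun x => 0 < x)) /\
    (* (b) *)
    strictly_log_concave_on dI (fun x => 0 < x < sqrt (2 * (nu + 3))) /\
    (* (c) *)
    (-1/2 < nu ->
      exists xnu, sqrt (2 * (nu + 3)) < xnu /\
        strictly_log_concave_on dI (fun x => 0 < x < xnu) /\
        strictly_log_convex_on dI (fun x => xnu < x)).
Proof.
  intros nu dI H HdI.
  set (x0 := sqrt (2 * (nu + 3))).
  assert (Hx0 : 0 < x0) by (apply sqrt_lt_R0; lra).
  pose proof (E_x0 nu H) as Ex0. fold x0 in Ex0.
  split; [|split].
  - intros Hn. apply (slc_of_E nu dI); try assumption.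
    + intros a b z Ha Hb Hz. lra.
    + intros a Ha. exact Ha.
    + intros a Ha. apply E_neg_a; assumption.
  - apply (slc_of_E nu dI); try assumption.
    + intros a b z Ha Hb Hz. lra.
    + intros a Ha. lra.
    + intros a Ha. destruct (Rle_or_lt nu (-1/2)) as [Hn|Hn].
      * apply E_neg_a; lra.
      * pose proof (E_incr nu a x0 Hn ltac:(lra) ltac:(lra)). lra.
  - intros Hn.
    destruct (E_big nu Hn) as [X [HX HEX]].
    assert (HxX : x0 < X).
    { destruct (Rlt_or_le x0 X) as [|Hle]; [assumption|exfalso].
      destruct Hle as [Hlt|Heq].
      - pose proof (E_incr nu X x0 Hn HX Hlt). lra.
      - subst. lra. }
    destruct (IVT (Ef nu) x0 X (E_cont nu H) HxX Ex0 HEX) as [z [Hz Ez]].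
    assert (Hxz : x0 < z).
    { destruct (proj1 Hz) as [|Heq]; [assumption|]. subst z. lra. }
    exists z. split; [exact Hxz| split].
    + apply (slc_of_E nu dI); try assumption.
      * intros a b w Ha Hb Hw. lra.
      * intros a Ha. lra.
      * intros a Ha. pose proof (E_incr nu a z Hn ltac:(lra) ltac:(lra)). lra.
    + apply (slcv_of_E nu dI); try assumption.
      * intros a b w Ha Hb Hw. lra.
      * intros a Ha. lra.
      * intros a Ha. pose proof (E_incr nu z a Hn ltac:(lra) ltac:(lra)). lra.
Qed.
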